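(* Let $r\ge 2$ and $k\ge 2$ be integers. For the hypergraphical clustering game with conflict-free seeking (CF) players on $r$-uniform hypergraphs: (1) if $k\ge r$, then $\left(\frac{k}{k-1}\right)^{r-1}\le PoA(\mathbb{H}_r,k)\le \frac{2k+r-2}{2k-r}$; (2) if $\frac r2<k<r$, then $\frac{k-1}{r}\left(\frac{k}{k-1}\right)^{r-1}\le PoA(\mathbb{H}_r,k)\le \frac{k-1}{r}\cdot\frac{2k+r-2}{2k-r}$; (3) if $k\le \frac r2$, then $PoA(\mathbb{H}_r,k)=\infty$.
   Context: A hypergraph $H=(V,\mathcal{E})$ consists of a finite nonempty set $V$ of vertices (players) and a finite set $\mathcal{E}$ of nonempty subsets of $V$ (hyperedges); we assume $\mathcal{E}\neq\emptyset$. $H$ is $r$-uniform if $|e|=r$ for all $e\in\mathcal{E}$; $\mathbb{H}_r$ denotes the family of $r$-uniform hypergraphs. A $k$-coloring is a map $c:V\to[k]=\{1,\dots,k\}$; $\mathcal{C}(k)$ is the set of all $k$-colorings; for $S\subseteq V$, $c(S)\subseteq[k]$ is the set of colors of vertices of $S$. $\mathcal{E}(v)=\{e\in\mathcal{E}: v\in e\}$. With CF players, the utility of $v$ is $u_v(c)=|\{e\in\mathcal{E}(v): |c(e)|=|c(e\setminus\{v\})|+1\}|$, i.e. the number of hyperedges containing $v$ in which the color of $v$ differs from the colors of all other vertices of the hyperedge. The social welfare is $SW(c)=\sum_{v\in V}u_v(c)$. A coloring $c$ is a (pure) Nash equilibrium if $u_v(c)\ge u_v(c_{-v},i)$ for all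 $v\in V$ and $i\in[k]$, where $(c_{-v},i)$ is $c$ with the color of $v$ replaced by $i$. $O(H,k)=\max_{c\in\mathcal{C}(k)}SW(c)$, $NE(H,k)=\min\{SW(c): c\in\mathcal{C}(k)\text{ a Nash equilibrium}\}$, and $PoA(\mathcal{H},k)=\sup_{H\in\mathcal{H}} O(H,k)/NE(H,k)$, with the convention $x/0=+\infty$ for $x>0$. *)

(* Defs.v *)
From HB Require Import structures.
From mathcomp Require Import all_boot all_order all_algebra.
Set Implicit Arguments. Unset Strict Implicit. Unset Printing Implicit Defensive.
Import Order.TTheory GRing.Theory Num.Theory.

Definition r_uniform_hypergraph (r : nat) (V : finType) (E : {set {set V}}) : Prop :=
  [/\ 0 < #|V|, E != set0 & forall e, e \in E -> #|e| = r].

Definition util (V : finType) (k : nat) (E : {set {set V}}) (c : {ffun V -> 'I_k}) (v : V) : nat :=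
  #|[set e in E | (v \in e) && (#|c @: e| == (#|c @: (e :\ v)|).+1)]|.

Definition SW (V : finType) (k : nat) (E : {set {set V}}) (c : {ffun V -> 'I_k}) : nat :=
  \sum_(v : V) util E c v.

Definition recolor (V : finType) (k : nat) (c : {ffun V -> 'I_k}) (v : V) (i : 'I_k) : {ffun V -> 'I_k} :=
  [ffun w => if w == v then i else c w].

Definition is_NE (V : finType) (k : nat) (E : {set {set V}}) (c : {ffun V -> 'I_k}) : Prop :=
  forall (v : V) (i : 'I_k), util E (recolor c v i) v <= util E c v.

Definition OPT (V : finType) (k : nat) (E : {set {set V}}) : nat :=
  \max_(c : {ffun V -> 'I_k}) SW E c.

Local Open Scope ring_scope.

(* PoA(H_r,k) = sup_H O(H,k)/NE(H,k) (with x/0 = +oo, x>0) is expressed through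
   the following three predicates on the extended-real value of that supremum. *)

Definition PoA_le (r k : nat) (B : rat) : Prop :=
  forall (V : finType) (E : {set {set V}}), r_uniform_hypergraph r E ->
  forall c : {ffun V -> 'I_k}, is_NE E c -> (OPT k E)%:R <= B * (SW E c)%:R.

Definition PoA_ge (r k : nat) (L : rat) : Prop :=
  forall eps : rat, 0 < eps ->
  exists (V : finType) (E : {set {set V}}), r_uniform_hypergraph r E /\
  exists c : {ffun V -> 'I_k}, is_NE E c /\ (L - eps) * (SW E c)%:R < (OPT k E)%:R.

Definition PoA_infinite (r k : nat) : Prop :=
  forall M : rat,
  exists (V : finType) (E : {set {set V}}), r_uniform_hypergraph r E /\
  exists c : {ffun V -> 'I_k}, is_NE E c /\ M * (SW E c)%:R < (OPT k E)%:R.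

(* Main.v *)
Require Import Defs.
From HB Require Import structures.
From mathcomp Require Import all_boot all_order all_algebra.
From mathcomp Require Import zify ring.
Set Implicit Arguments. Unset Strict Implicit. Unset Printing Implicit Defensive.
Import Order.TTheory GRing.Theory Num.Theory.

Definition uat (V : finType) (k : nat) (c : {ffun V -> 'I_k}) (e : {set V}) (v : V) : bool :=
  #|c @: e| == (#|c @: (e :\ v)|).+1.

Lemma card_sep (T : finType) (A : {set T}) (P : pred T) :
  #|[set x in A | P x]| = \sum_(x in A) P x.
Proof.
rewrite -sum1_card big_mkcond [RHS]big_mkcond; apply: eq_bigr => x _.
by rewrite inE; case: (x \in A); case: (P x).
Qed.

Lemma card_split (V : finType) (k : nat) (c : {ffun V -> 'I_k}) (e : {set V}) v : v \in e ->
  #|c @: e| = (c v \notin c @: (e :\ v)) + #|c @: (e :\ v)|.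
Proof. by move=> ve; rewrite -{1}(setD1K ve) imsetU1 cardsU1. Qed.

Lemma uatE (V : finType) (k : nat) (c : {ffun V -> 'I_k}) (e : {set V}) v : v \in e ->
  uat c e v = (c v \notin c @: (e :\ v)).
Proof.
move=> ve; rewrite /uat (card_split c ve).
by case: (c v \notin _) => /=; rewrite ?eqxx // add0n; apply/negbTE; rewrite neq_ltn ltnSn ?orbT.
Qed.

Lemma uatP (V : finType) (k : nat) (c : {ffun V -> 'I_k}) (e : {set V}) v : v \in e ->
  reflect (forall w, w \in e -> w != v -> c w != c v) (uat c e v).
Proof.
move=> ve; rewrite uatE //; apply: (iffP idP).
  move=> H w we wv; apply/eqP => E; move/negP: H; apply; apply/imsetP; exists w => //.
  by rewrite !inE wv.
move=> H; apply/imsetP => -[w]; rewrite !inE => /andP [wv we] E.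
by move: (H w we wv); rewrite E eqxx.
Qed.

Lemma SW_edges (V : finType) (k : nat) (E : {set {set V}}) (c : {ffun V -> 'I_k}) :
  SW E c = \sum_(e in E) #|[set v in e | uat c e v]|.
Proof.
rewrite /SW /util.
under eq_bigr do rewrite card_sep.
rewrite exchange_big /=; apply: eq_bigr => e _.
rewrite card_sep [RHS]big_mkcond /=; apply: eq_bigr => v _.
by case: (v \in e).
Qed.

Section Edge.
Variables (V : finType) (k : nat) (c : {ffun V -> 'I_k}) (e : {set V}).
Let U := [set v in e | uat c e v].
Let W := e :\: U.

Lemma nonuat_partner w : w \in e -> ~~ uat c e w ->
  exists2 w', w' \in W & (w' != w) && (c w' == c w).
Proof.
move=> we; rewrite uatE // negbK => /imsetP [w' ]; rewrite !inE => /andP [w'w w'e] E.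
exists w'; last by rewrite w'w E eqxx.
rewrite /W /U !inE w'e andbT /=; apply/negP => /(uatP _ w'e) H.
by move: (H w we); rewrite eq_sym w'w E eqxx => /(_ isT).
Qed.

Lemma U_sub : U \subset e. Proof. by apply/subsetP => v; rewrite inE => /andP []. Qed.

Lemma cardUW : #|U| + #|W| = #|e|.
Proof. by rewrite -(cardsID U e); congr (_ + _); rewrite (setIidPr U_sub). Qed.

Lemma eUW : e = U :|: W.
Proof.
apply/setP => v; rewrite !inE; case ve: (v \in e); rewrite ?andbF //=.
by case: (uat c e v).
Qed.

Lemma W2 : 2 * #|c @: W| <= #|W|.
Proof.
rewrite -[in X in _ <= X]sum1_card (partition_big_imset c) /= mulnC -sum_nat_const leq_sum // => x /imsetP [w wW ->].
rewrite sum1dep_card.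
have we : w \in e by move: wW; rewrite /W /U !inE => /andP [].
have nu : ~~ uat c e w by move: wW; rewrite /W /U !inE we /= andbT.
case: (nonuat_partner we nu) => w' w'W /andP [w'w /eqP cw'].
apply: leq_trans (subset_leq_card (_ : [set w; w'] \subset _)).
  by rewrite cards2 eq_sym w'w.
have w'e : w' \in e by move: w'W; rewrite /W /U !inE => /andP [].
have nu' : ~~ uat c e w' by move: w'W; rewrite /W /U !inE w'e /= andbT.
apply/subsetP => y; rewrite !inE => /orP [] /eqP ->; rewrite ?eqxx ?cw' ?andbT.
  by rewrite we nu.
by rewrite w'e nu' eqxx.
Qed.

Lemma edge2 : 2 * #|c @: e| <= #|e| + #|U|.
Proof.
have h1 : #|c @: e| <= #|c @: U| + #|c @: W|.
  by rewrite {1}eUW imsetU cardsU leq_subr.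
have h2 := leq_imset_card c U.
have h3 := W2. have h4 := cardUW. lia.
Qed.

Lemma U_inj : {in U &, injective c}.
Proof.
move=> u u'; rewrite !inE => /andP [ue uu] /andP [u'e _] E.
apply/eqP; apply/negP => /negP nu.
by move/(uatP _ ue): uu => /(_ u' u'e); rewrite eq_sym nu E eqxx => /(_ isT).
Qed.

Lemma edgek : k < #|e| -> #|U| < k.
Proof.
move=> ke.
have cU : #|c @: U| = #|U| := card_in_imset U_inj.
have Uk : #|U| <= k by rewrite -cU; have := max_card (pred_of_set (c @: U)); rewrite card_ord.
have : ~~ (e \subset U).
  apply/negP => /subset_leq_card; lia.
case/subsetPn => w we wU.
have wn : c w \notin c @: U.
  apply/imsetP => -[u uU E]; move: (uU); rewrite inE => /andP [ue /(uatP _ ue) H].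
  have wu : w != u by apply: contraNneq wU => ->.
  by move: (H w we wu); rewrite E eqxx.
have := max_card (pred_of_set (c w |: c @: U)).
by rewrite cardsU1 wn card_ord cU add1n.
Qed.

Lemma U_le : #|U| <= #|e|.
Proof. exact: subset_leq_card U_sub. Qed.

Lemma edge_sum :
  \sum_(v in e) (k - #|c @: (e :\ v)|) = #|e| * (k - #|c @: e|) + #|U|.
Proof.
have dk : #|c @: e| <= k by have := max_card (pred_of_set (c @: e)); rewrite card_ord.
rewrite /U card_sep -sum_nat_const -big_split /=; apply: eq_bigr => v ve.
have := card_split c ve; rewrite -uatE //; case: (uat c e v) => /= H; move: dk; rewrite H; lia.
Qed.
End Edge.

Lemma card_sepT (T : finType) (P : pred T) : #|[set x | P x]| = \sum_x P x.
Proof. by rewrite -sum1dep_card big_mkcond; apply: eq_bigr => x _; case: (P x). Qed.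

Lemma util_recolor (V : finType) (k : nat) (E : {set {set V}}) (c : {ffun V -> 'I_k}) v i :
  util E (recolor c v i) v = \sum_(e in E) ((v \in e) && (i \notin c @: (e :\ v))).
Proof.
rewrite /util card_sep; apply: eq_bigr => e _; case ve: (v \in e) => //=.
have := uatE (recolor c v i) ve; rewrite /uat => ->.
have -> : [set recolor c v i x | x in e :\ v] = [set c x | x in e :\ v].
  by apply: eq_in_imset => w; rewrite !inE ffunE => /andP [/negbTE -> _].
by rewrite ffunE eqxx.
Qed.

Lemma NE_sum (V : finType) (k : nat) (E : {set {set V}}) (c : {ffun V -> 'I_k}) :
  is_NE E c -> \sum_(e in E) \sum_(v in e) (k - #|c @: (e :\ v)|) <= k * SW E c.
Proof.
move=> NE.
have H1 : \sum_v \sum_(i : 'I_k) util E (recolor c v i) v <= k * SW E c.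
  rewrite /SW big_distrr /=; apply: leq_sum => v _.
  apply: leq_trans (_ : \sum_(i : 'I_k) util E c v <= _).
    by apply: leq_sum => i _; apply: NE.
  by rewrite sum_nat_const card_ord.
apply: leq_trans H1; rewrite leq_eqVlt; apply/orP; left; apply/eqP.
under [RHS]eq_bigr do under eq_bigr do rewrite util_recolor.
under [RHS]eq_bigr do rewrite exchange_big /=.
rewrite [RHS]exchange_big /=; apply: eq_bigr => e _.
rewrite [LHS]big_mkcond /=; apply: eq_bigr => v _.
case ve: (v \in e) => /=; last by rewrite big1.
rewrite -card_sepT.
have -> : [set x | x \notin c @: (e :\ v)] = ~: (c @: (e :\ v)) by apply/setP => x; rewrite !inE.
have := cardsC (c @: (e :\ v)); rewrite card_ord => H.
have Xk : #|c @: (e :\ v)| <= k by rewrite -[X in _ <= X]H leq_addr.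
by apply/eqP; rewrite -(eqn_add2l #|c @: (e :\ v)|) subnKC // H.
Qed.

Lemma UB_core (V : finType) (k r : nat) (E : {set {set V}}) (c : {ffun V -> 'I_k}) :
  (forall e, e \in E -> #|e| = r) -> is_NE E c ->
  r * (2 * k - r) * #|E| + 2 * SW E c <= (2 * k + r) * SW E c.
Proof.
move=> hE NE.
have HN := NE_sum NE.
have HS := SW_edges E c.
set S := SW E c in HN HS *.
have H1 : \sum_(e in E) (r * (2 * k - r) + 2 * #|[set v in e | uat c e v]|)
   <= \sum_(e in E) (2 * (\sum_(v in e) (k - #|c @: (e :\ v)|)) + r * #|[set v in e | uat c e v]|).
  apply: leq_sum => e eE; rewrite edge_sum (hE e eE).
  have h2 := edge2 c e; rewrite (hE e eE) in h2.
  have dk : #|c @: e| <= k by have := max_card (pred_of_set (c @: e)); rewrite card_ord.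
  set s := #|[set v in e | uat c e v]| in h2 *.
  set d := #|c @: e| in h2 dk *.
  have : 2 * k - r <= s + 2 * (k - d) by clearbody s d; lia.
  move=> H; have := leq_mul (leqnn r) H; clearbody s d; rewrite mulnDr; lia.
rewrite big_split /= sum_nat_const -big_distrr /= -HS big_split /= -!big_distrr /= -HS in H1.
rewrite (mulnC (r * (2 * k - r))).
have H2 : 2 * (\sum_(e in E) \sum_(v in e) (k - #|c @: (e :\ v)|)) + r * S <= (2 * k + r) * S.
  by rewrite mulnDl -mulnA leq_add2r leq_mul2l HN orbT.
exact: (leq_trans H1 H2).
Qed.


Lemma card_fam (r k : nat) (p : 'I_r) (i : 'I_k) (Q : pred 'I_k) :
  #|[set f : {ffun 'I_r -> 'I_k} | (f p == i) && [forall q, (q != p) ==> Q (f q)]]|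
  = #|Q| ^ r.-1.
Proof.
pose F := fun x : 'I_r => if x == p then pred1 i else [pred y | Q y].
have -> : #|[set f : {ffun 'I_r -> 'I_k} | (f p == i) && [forall q, (q != p) ==> Q (f q)]]|
        = #|family F|.
  apply: eq_card => f; rewrite inE; apply/andP/familyP.
    move=> [/eqP fp /forallP H] x; rewrite /F; case: eqP => [->|/eqP xp].
      by rewrite inE fp.
    by have := H x; rewrite xp.
  move=> H; split.
    by have := H p; rewrite /F eqxx inE.
  by apply/forallP => q; apply/implyP => qp; have := H q; rewrite /F (negbTE qp).
rewrite card_family foldrE big_map big_enum /= (bigD1 p) //= /F eqxx card1 mul1n.
rewrite (eq_bigr (fun _ => #|Q|)); last by move=> x /negbTE ->; apply: eq_card.
by rewrite prod_nat_const cardC1 card_ord.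
Qed.

Lemma imset_sep (aT rT : finType) (g : aT -> rT) (A : {set aT}) (P : pred rT) :
  [set y in g @: A | P y] = g @: [set x in A | P (g x)].
Proof.
apply/setP => y; rewrite inE; apply/andP/imsetP.
  by move=> [/imsetP [x xA ->] Px]; exists x; rewrite // inE xA.
by move=> [x]; rewrite inE => /andP [xA Px] ->; split; rewrite // imset_f.
Qed.

Section Constr.
Variables (r k : nat).
Definition cV : finType := ('I_r * 'I_k)%type.
Definition edge (f : {ffun 'I_r -> 'I_k}) : {set cV} := [set ((q, f q) : cV) | q : 'I_r].
Definition cE : {set {set cV}} := [set edge f | f : {ffun 'I_r -> 'I_k}].

Lemma edge_inj : injective edge.
Proof.
move=> f g H; apply/ffunP => q.
have : ((q, f q) : cV) \in edge g by rewrite -H; apply: imset_f.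
by case/imsetP => q' _ [<- ->].
Qed.

Lemma edge_card f : #|edge f| = r.
Proof. by rewrite card_imset ?card_ord // => x y []. Qed.

Lemma in_edge f p i : (((p, i) : cV) \in edge f) = (f p == i).
Proof.
apply/imsetP/eqP => [[q _ [-> ->]] // | <-]; by exists p.
Qed.

Lemma cond_edge (c : {ffun cV -> 'I_k}) p i f :
  (((p, i) : cV) \in edge f) && uat c (edge f) (p, i) =
  (f p == i) && [forall q, (q != p) ==> (c (q, f q) != c (p, i))].
Proof.
rewrite in_edge; case fp: (f p == i) => //=.
have pe : ((p, i) : cV) \in edge f by rewrite in_edge.
apply/(uatP c pe)/forallP => [H q | H w].
  apply/implyP => qp; apply: H; first exact: imset_f.
  by apply: contra qp => /eqP [->].
case/imsetP => q _ -> wp; have := H q.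
have qp : q != p by apply: contra wp => /eqP ->; move/eqP: fp => ->.
by rewrite qp.
Qed.

Lemma util_c (c : {ffun cV -> 'I_k}) p i :
  util cE c ((p, i) : cV) =
  #|[set f : {ffun 'I_r -> 'I_k} | (f p == i) && [forall q, (q != p) ==> (c (q, f q) != c (p, i))]]|.
Proof.
rewrite -(card_imset _ edge_inj) /util; congr (#|pred_of_set _|).
apply/setP => e; rewrite inE; apply/andP/imsetP.
  move=> [/imsetP [f _ ->] H]; exists f => //; rewrite inE -cond_edge.
  by move: H; rewrite -/(uat c (edge f) (p, i)) => /andP [-> ->].
move=> [f]; rewrite inE -cond_edge => /andP [H1 H2] ->; split; first exact: imset_f.
by rewrite H1.
Qed.
End Constr.

Section Colorings.
Variables (r k : nat) (hk : 0 < k).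

Definition c0 : {ffun cV r k -> 'I_k} := [ffun v => v.2].

Lemma util_c0_recolor (v : cV r k) j : util (cE r k) (recolor c0 v j) v = (k.-1) ^ r.-1.
Proof.
case: v => p i; rewrite util_c.
have -> : #|[set f : {ffun 'I_r -> 'I_k} | (f p == i) &&
     [forall q, (q != p) ==> (recolor c0 (p, i) j (q, f q) != recolor c0 (p, i) j (p, i))]]|
   = #|[set f : {ffun 'I_r -> 'I_k} | (f p == i) && [forall q, (q != p) ==> (f q != j)]]|.
  apply: eq_card => f; rewrite !inE; case: (f p == i) => //=.
  apply: eq_forallb => q; rewrite !ffunE eqxx /=.
  case qp: (q != p) => //=.
  have -> : ((q, f q) == (p, i)) = false by apply/negbTE; apply: contra qp => /eqP [->].
  by [].
rewrite (card_fam p i (fun y => y != j)).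
have -> : #|(fun y : 'I_k => y != j)| = k.-1.
  by have := cardC1 j; rewrite card_ord => <-; apply: eq_card.
by [].
Qed.

Lemma recolor_id (V : finType) (c : {ffun V -> 'I_k}) v : recolor c v (c v) = c.
Proof. by apply/ffunP => w; rewrite ffunE; case: eqP => [->|]. Qed.

Lemma util_c0 (v : cV r k) : util (cE r k) c0 v = (k.-1) ^ r.-1.
Proof. by rewrite -{1}(recolor_id c0 v) util_c0_recolor. Qed.

Lemma NE_c0 : is_NE (cE r k) c0.
Proof. by move=> v i; rewrite util_c0 util_c0_recolor. Qed.

Lemma SW_c0 : SW (cE r k) c0 = r * k * (k.-1) ^ r.-1.
Proof.
rewrite /SW (eq_bigr (fun _ => (k.-1) ^ r.-1)); last by move=> v _; rewrite util_c0.
by rewrite sum_nat_const card_prod !card_ord.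
Qed.

Lemma gk_lt (q : 'I_r) : minn q k.-1 < k.
Proof. have := geq_minr q k.-1; lia. Qed.

Definition gk (q : 'I_r) : 'I_k := Ordinal (gk_lt q).
Definition c1 : {ffun cV r k -> 'I_k} := [ffun v => gk v.1].

Lemma good (p q : 'I_r) : q != p -> (p < k.-1) || (r <= k) -> gk q != gk p.
Proof.
move=> qp H; apply/negP => /eqP /(congr1 val) /= E.
have qp' : (q : nat) <> p by move=> h; move/negP: qp; apply; apply/eqP; apply: val_inj.
have := ltn_ord q; have := ltn_ord p; move: H E qp'; clear; lia.
Qed.

Lemma util_c1 (p : 'I_r) i : (p < k.-1) || (r <= k) -> util (cE r k) c1 (p, i) = k ^ r.-1.
Proof.
move=> H; rewrite util_c.
have ck : #|(xpredT : pred 'I_k)| = k by apply: (etrans _ (card_ord k)); apply: eq_card.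
rewrite -[in RHS]ck -(card_fam p i xpredT); apply: eq_card => f; rewrite !inE.
case: (f p == i) => //=; apply: eq_forallb => q; rewrite !ffunE /=.
by case qp: (q != p) => //=; apply: good.
Qed.

Lemma SW_c1 m (Hm : m <= r) : (m <= k.-1) || (r <= k) -> m * (k * k ^ r.-1) <= SW (cE r k) c1.
Proof.
move=> H.
have E1 : SW (cE r k) c1 = \sum_(p : 'I_r) \sum_(i : 'I_k) util (cE r k) c1 (p, i).
  by rewrite /SW pair_big; apply: eq_bigr => -[p i].
pose G := [set widen_ord Hm q | q : 'I_m].
have cG : #|G| = m.
  rewrite card_imset ?card_ord // => x y /(congr1 val) /= E; exact: val_inj.
rewrite E1 (bigID (mem G)) /=; apply: leq_trans (leq_addr _ _).
rewrite (eq_bigl (mem G)) // -{1}cG -sum_nat_const; apply: leq_sum => p pG.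
have pm : p < m by case/imsetP: pG => q _ ->; rewrite /= ltn_ord.
have Hp : (p < k.-1) || (r <= k).
  by case/orP: H => H; apply/orP; [left; exact: leq_trans pm H | right].
rewrite (eq_bigr (fun _ => k ^ r.-1)); last by move=> i _; rewrite util_c1.
by rewrite sum_nat_const card_ord.
Qed.
End Colorings.


Lemma cE_unif r k : 0 < r -> 0 < k -> r_uniform_hypergraph r (cE r k).
Proof.
move=> hr hk; split.
- by rewrite card_prod !card_ord muln_gt0 hr hk.
- by apply/set0Pn; exists (edge [ffun _ : 'I_r => Ordinal hk]); apply: imset_f.
- by move=> e /imsetP [f _ ->]; apply: edge_card.
Qed.

Lemma OPT_ge (V : finType) k (E : {set {set V}}) (c : {ffun V -> 'I_k}) : SW E c <= OPT k E.
Proof. rewrite /OPT; exact: leq_bigmax. Qed.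

Lemma OPT_le (V : finType) k (E : {set {set V}}) M : (forall c : {ffun V -> 'I_k}, SW E c <= M) -> OPT k E <= M.
Proof. by move=> H; apply/bigmax_leqP => c _. Qed.

Lemma SW_le (V : finType) k (E : {set {set V}}) (c : {ffun V -> 'I_k}) m :
  (forall e, e \in E -> #|[set v in e | uat c e v]| <= m) -> SW E c <= #|E| * m.
Proof. by move=> H; rewrite SW_edges -sum_nat_const; apply: leq_sum. Qed.

Lemma UB_main (V : finType) k r (E : {set {set V}}) (c : {ffun V -> 'I_k}) :
  (2 <= r) -> r_uniform_hypergraph r E -> is_NE E c ->
  r * (2 * k - r) * #|E| <= (2 * k + r - 2) * SW E c.
Proof.
move=> hr [_ _ hE] NE; have := UB_core hE NE.
set S := SW E c; set X := r * (2 * k - r) * #|E|.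
rewrite !mulnBl mulnDl; clearbody S X; nia.
Qed.


Local Open Scope ring_scope.

Lemma powfrac (a b n : nat) : (0 < b)%N ->
  (a%:R / b%:R : rat) ^+ n * (b ^ n)%:R = (a ^ n)%:R.
Proof.
move=> hb; rewrite expr_div_n !natrX.
have hb' : (b%:R : rat) ^+ n != 0 by rewrite expf_neq0 // pnatr_eq0 -lt0n.
by rewrite mulrAC -mulrA divff // mulr1.
Qed.

Lemma rat_le (x n d s : nat) : (0 < d)%N -> (d * x <= n * s)%N ->
  (x%:R : rat) <= n%:R / d%:R * s%:R.
Proof.
move=> hd H; rewrite mulrAC ler_pdivlMr ?ltr0n // -!natrM ler_nat mulnC //.
Qed.

Lemma lt_eps (L eps : rat) (S O : nat) : 0 < eps -> (0 < S)%N -> L * S%:R <= O%:R ->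
  (L - eps) * S%:R < O%:R.
Proof.
move=> he hS H; apply: lt_le_trans H; rewrite mulrBl ltrBlDr ltrDl mulr_gt0 // ltr0n //.
Qed.

Lemma part1_le r k : (2 <= r)%N -> (2 <= k)%N -> (r <= k)%N ->
  PoA_le r k ((2 * k + r - 2)%N%:R / (2 * k - r)%N%:R).
Proof.
move=> hr hk hrk V E hu c NE; apply: rat_le; first by lia.
have hE : forall e, e \in E -> #|e| = r by case: hu.
have HO : (OPT k E <= #|E| * r)%N.
  apply: OPT_le => c'; apply: SW_le => e eE; rewrite -(hE e eE); exact: U_le.
have := UB_main hr hu NE.
have := leq_mul (leqnn (2 * k - r)) HO.
clear -hr; set O := OPT k E; set S := SW E c; set X := #|E|; set D := (2 * k - r)%N; set N := (2 * k + r - 2)%N; clearbody O S X D N; nia.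
Qed.

Lemma part2_le r k : (2 <= r)%N -> (2 <= k)%N -> (r < 2 * k)%N -> (k < r)%N ->
  PoA_le r k ((k.-1)%:R / r%:R * ((2 * k + r - 2)%N%:R / (2 * k - r)%N%:R)).
Proof.
move=> hr hk hrk hkr V E hu c NE.
have -> : (k.-1)%:R / r%:R * ((2 * k + r - 2)%N%:R / (2 * k - r)%N%:R)
    = (k.-1 * (2 * k + r - 2))%N%:R / (r * (2 * k - r))%N%:R :> rat.
  have h1 : (r%:R : rat) != 0 by rewrite pnatr_eq0; lia.
  have h2 : ((2 * k - r)%N%:R : rat) != 0 by rewrite pnatr_eq0; lia.
  rewrite !natrM; field; by rewrite h1 h2.
apply: rat_le; first by rewrite muln_gt0; apply/andP; split; lia.
have hE : forall e, e \in E -> #|e| = r by case: hu.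
have HO : (OPT k E <= #|E| * k.-1)%N.
  apply: OPT_le => c'; apply: SW_le => e eE.
  have := edgek c' (_ : (k < #|e|)%N); rewrite (hE e eE) => /(_ hkr); lia.
have := UB_main hr hu NE.
have := leq_mul (leqnn (r * (2 * k - r))) HO.
clear -hr; set O := OPT k E; set S := SW E c; set X := #|E|; set D := (2 * k - r)%N; set N := (2 * k + r - 2)%N; clearbody O S X D N; nia.
Qed.

Lemma part_ge r k (L : rat) m : (2 <= r)%N -> (2 <= k)%N -> (m <= r)%N ->
  ((m <= k.-1) || (r <= k))%N ->
  L * (r * k * (k.-1) ^ r.-1)%N%:R <= (m * (k * k ^ r.-1))%N%:R ->
  PoA_ge r k L.
Proof.
move=> hr hk hm hmk HL eps he.
have hk0 : (0 < k)%N by lia.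
exists (cV r k), (cE r k); split; first by apply: cE_unif; lia.
exists (c0 r k); split; first exact: NE_c0.
apply: lt_eps => //; first by rewrite SW_c0 !muln_gt0 expn_gt0; apply/andP; split; [apply/andP; split|]; lia.
rewrite SW_c0; apply: (le_trans HL); rewrite ler_nat.
apply: leq_trans (OPT_ge _ (c1 r hk0)); exact: SW_c1.
Qed.

Lemma part1_ge r k : (2 <= r)%N -> (2 <= k)%N -> (r <= k)%N ->
  PoA_ge r k ((k%:R / (k.-1)%:R) ^+ r.-1).
Proof.
move=> hr hk hrk; apply: (part_ge (m := r)) => //; first by rewrite hrk orbT.
rewrite natrM mulrA (mulrC _ (r * k)%N%:R) -mulrA powfrac; last by lia.
rewrite -natrM ler_nat.
have -> : (r * (k * k ^ r.-1) = r * k * k ^ r.-1)%N by rewrite mulnA.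
by [].
Qed.

Lemma part2_ge r k : (2 <= r)%N -> (2 <= k)%N -> (k < r)%N ->
  PoA_ge r k ((k.-1)%:R / r%:R * (k%:R / (k.-1)%:R) ^+ r.-1).
Proof.
move=> hr hk hkr; apply: (part_ge (m := k.-1)) => //; first by lia.
  by rewrite leqnn.
have key := powfrac k r.-1 (_ : (0 < k.-1)%N); rewrite -/(_ ^ _)%N in key.
have h1 : (r%:R : rat) != 0 by rewrite pnatr_eq0; lia.
have -> : (k.-1)%:R / r%:R * (k%:R / (k.-1)%:R) ^+ r.-1 * (r * k * k.-1 ^ r.-1)%N%:R
   = (k.-1)%:R * k%:R * ((k%:R / (k.-1)%:R) ^+ r.-1 * (k.-1 ^ r.-1)%N%:R) :> rat.
  rewrite !natrM; field; by rewrite h1.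
by rewrite powfrac ?ler_nat; [rewrite -!natrM mulnA | lia].
Qed.

Section Inf.
Variables (r k : nat) (hk : (2 <= k)%N) (hrk : (2 * k <= r)%N).
Let hk0 : (0 < k)%N. Proof. by lia. Qed.
Let hr0 : (0 < r)%N. Proof. by lia. Qed.

Definition Einf : {set {set 'I_r}} := [set [set: 'I_r]].
Definition cinf : {ffun 'I_r -> 'I_k} := [ffun v : 'I_r => Ordinal (ltn_pmod (nat_of_ord v) hk0)].

Lemma partner (v : 'I_r) (x : 'I_k) : exists2 w : 'I_r, w != v & cinf w = x.
Proof.
have ha : (x < r)%N by have := ltn_ord x; lia.
have hb : (x + k < r)%N by have := ltn_ord x; lia.
have ca : cinf (Ordinal ha) = x by apply: val_inj; rewrite ffunE /= modn_small.
have cb : cinf (Ordinal hb) = x by apply: val_inj; rewrite ffunE /= modnDr modn_small.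
case: (eqVneq (Ordinal ha) v) => [Ev|]; last by exists (Ordinal ha).
exists (Ordinal hb) => //; rewrite -Ev; apply/eqP => /(congr1 val) /=; lia.
Qed.

Lemma util0 (c : {ffun 'I_r -> 'I_k}) v :
  (forall w, w != v -> c w = cinf w) -> util Einf c v = 0%N.
Proof.
move=> H; apply/eqP; rewrite cards_eq0; apply/eqP/setP => e; rewrite !inE.
case eE: (e == [set: 'I_r]) => //=; move/eqP: eE => ->.
rewrite ?in_setT /=; apply/negP => /(uatP c (in_setT v)) H2.
case: (partner v (c v)) => w wv cw.
by move: (H2 w (in_setT w) wv); rewrite H // cw eqxx.
Qed.

Lemma NE_inf : is_NE Einf cinf.
Proof.
move=> v i; rewrite util0 // => w wv; rewrite ffunE (negbTE wv) //.
Qed.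

Lemma SW_inf : SW Einf cinf = 0%N.
Proof. by rewrite /SW big1 // => v _; rewrite util0. Qed.

Lemma OPT_inf : (0 < OPT k Einf)%N.
Proof.
pose v0 : 'I_r := Ordinal hr0.
pose c2 : {ffun 'I_r -> 'I_k} :=
  [ffun v => if v == v0 then Ordinal (hk : (1 < k)%N) else Ordinal hk0].
apply: leq_trans (OPT_ge _ c2).
rewrite /SW (bigD1 v0) //=; apply: leq_trans (leq_addr _ _).
rewrite card_gt0; apply/set0Pn; exists [set: 'I_r]; rewrite !inE eqxx ?in_setT /=.
apply/(uatP c2 (in_setT v0)) => w _ wv; rewrite !ffunE eqxx (negbTE wv).
by apply/eqP => /(congr1 val).
Qed.

Lemma part3 : PoA_infinite r k.
Proof.
move=> M; exists 'I_r, Einf; split.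
  split; [by rewrite card_ord | by apply/set0Pn; exists [set: 'I_r]; rewrite inE |].
  by move=> e; rewrite inE => /eqP ->; rewrite cardsT card_ord.
exists cinf; split; first exact: NE_inf.
by rewrite SW_inf mulr0 ltr0n OPT_inf.
Qed.
End Inf.

Theorem theorem2 (r k : nat) (hr : (2 <= r)%N) (hk : (2 <= k)%N) :
  [/\ ((r <= k)%N ->
         PoA_ge r k ((k%:R / (k.-1)%:R) ^+ r.-1) /\
         PoA_le r k ((2 * k + r - 2)%N%:R / (2 * k - r)%N%:R)),
      ((r < 2 * k)%N -> (k < r)%N ->
         PoA_ge r k ((k.-1)%:R / r%:R * (k%:R / (k.-1)%:R) ^+ r.-1) /\
         PoA_le r k ((k.-1)%:R / r%:R * ((2 * k + r - 2)%N%:R / (2 * k - r)%N%:R)))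
    & ((2 * k <= r)%N -> PoA_infinite r k)].
Proof.
split.
- by move=> h; split; [apply: part1_ge | apply: part1_le].
- by move=> h1 h2; split; [apply: part2_ge | apply: part2_le].
- by move=> h; apply: part3.
Qed.
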